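(* Let $n\ge1$ and $\mathbf{x}\in\{0,1\}^n$. Let $\omega=\omega(\mathbf{x}')$, let $m$ be the number of 1-runs in $\mathbf{x}'$, and for $i=1,2$ let $m_i$ be the number of 1-runs of $\mathbf{x}'$ of length $i$. For $j=0,1,\dots,6$ let $B_j$ be the number of $\mathbf{y}\in\Phi_3(\mathbf{x})$ with $\omega(\mathbf{y}')=\omega-j$. Then (a) $B_0+B_1=1+m+\binom{m}{2}+\binom{m}{3}$; (b) $B_2+B_3=(\omega-m)\bigl(1+m+\binom{m}{2}\bigr)-m(m-m_1)$; (c) $B_4+B_5=(1+m)\left[\binom{\omega-m}{2}-(\omega-m)\right]-(\omega-2m-3)(m-m_1)-m_2$; (d) $B_6=\binom{\omega-m}{3}-(\omega-m)(\omega-m+1)+(\omega-m)(m-m_1)+4(\omega-2m+m_1)+m_2$.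
   Context: A grain pattern of length $n$ is a subset $E\subseteq\{2,\dots,n\}$ containing no two consecutive integers. For such $E$, $\phi_E:\{0,1\}^n\to\{0,1\}^n$ sends $\mathbf{x}=(x_1,\dots,x_n)$ to $\mathbf{y}$ with $y_j=x_{j-1}$ if $j\in E$ and $y_j=x_j$ otherwise. $\Phi_t(\mathbf{x})=\{\phi_E(\mathbf{x}): E \text{ a grain pattern of length } n,\ |E|\le t\}$ (a set). The derivative sequence of $\mathbf{x}$ is $\mathbf{x}'=(x'_2,\dots,x'_n)$ with $x'_j=x_{j-1}\oplus x_j$ (mod 2); $\omega(\cdot)$ is Hamming weight; a 1-run of $\mathbf{x}'$ is a maximal block of consecutive 1s. Binomial coefficients $\binom{a}{b}$ are $0$ when $b>a\ge0$. *)

(* Defs.v *)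
(* Binary words are n.-tuple bool; positions 1..n of the
   paper are the 0-based indices 0..n-1 (type 'I_n). *)
From mathcomp Require Import all_boot all_order all_algebra.
Set Implicit Arguments. Unset Strict Implicit. Unset Printing Implicit Defensive.

(* Grain pattern of length n: E ⊆ {2,..,n} (1-based) = {1,..,n-1} (0-based),
   with no two consecutive integers. *)
Definition grain_pattern (n : nat) (E : {set 'I_n}) : bool :=
  [forall i in E, 0 < val i] &&
  [forall i in E, forall j in E, val j != (val i).+1].

Definition phiE (n : nat) (E : {set 'I_n}) (x : n.-tuple bool) : n.-tuple bool :=
  [tuple (if i \in E then nth false x (val i).-1 else nth false x (val i)) | i < n].

Definition Phi (n t : nat) (x : n.-tuple bool) : {set n.-tuple bool} :=
  [set phiE E x | E : {set 'I_n} in [set E : {set 'I_n} | grain_pattern E && (#|E| <= t)]].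

Definition deriv_seq (s : seq bool) : seq bool :=
  [seq (p.1 (+) p.2) | p <- zip s (behead s)].

Definition weight (s : seq bool) : nat := count id s.

(* Lengths of the maximal blocks of consecutive 1s (1-runs), left to right;
   [cur] is the length of the currently open block. *)
Fixpoint runs1_aux (cur : nat) (s : seq bool) : seq nat :=
  match s with
  | [::] => if 0 < cur then [:: cur] else [::]
  | true :: s' => runs1_aux cur.+1 s'
  | false :: s' => (if 0 < cur then [:: cur] else [::]) ++ runs1_aux 0 s'
  end.
Definition runs1 (s : seq bool) : seq nat := runs1_aux 0 s.

Definition nruns (s : seq bool) : nat := size (runs1 s).
Definition nruns_len (i : nat) (s : seq bool) : nat := count (pred1 i) (runs1 s).

Definition Bcount (n : nat) (x : n.-tuple bool) (j : nat) : nat :=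
  #|[set y in Phi 3 x | weight (deriv_seq y) + j == weight (deriv_seq x)]|.

(* Main.v *)
Require Import Defs.
From mathcomp Require Import all_boot all_order all_algebra.
From mathcomp Require Import ring zify.
Import GRing.Theory Num.Theory.
Set Implicit Arguments. Unset Strict Implicit. Unset Printing Implicit Defensive.

Fixpoint Fl (t : nat) (d : seq bool) {struct d} : seq (seq bool) :=
  match d with
  | [::] => [:: [::]]
  | false :: r => map (cons false) (Fl t r)
  | true :: r =>
    match r with
    | [::] => [:: [:: true]] ++ (if t is _.+1 then [:: [:: false]] else [::])
    | b :: r' => map (cons true) (Fl t r) ++
        (if t is t'.+1 then map (fun s => false :: ~~ b :: s) (Fl t' r') else [::])
    end
  end.

Definition applyD (f : nat -> bool) (d : seq bool) : seq bool :=
  mkseq (fun i => if f i then false else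
           if (0 < i) && f i.-1 then nth false d i.-1 (+) nth false d i
           else nth false d i) (size d).

Definition validf (f : nat -> bool) := forall i, f i -> ~~ f i.+1.

Lemma size_applyD f d : size (applyD f d) = size d.
Proof. by rewrite size_mkseq. Qed.

Lemma count_iotaS (f : nat -> bool) n :
  count f (iota 0 n.+1) = (f 0 + count (fun i => f i.+1) (iota 0 n))%N.
Proof.
by rewrite /= -[1%N]addn0 iotaDl count_map.
Qed.

Lemma applyD_cons0 f a r : f 0 = false ->
  applyD f (a :: r) = a :: applyD (fun i => f i.+1) r.
Proof.
move=> f0; rewrite /applyD /mkseq /= f0 /=; congr cons.
rewrite -[1%N]addn0 iotaDl -map_comp; apply: eq_map => i /=.
by case: i => [|i] //=; rewrite ?f0.
Qed.

Lemma applyD_cons1 f a b r : f 0 = true -> f 1 = false ->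
  applyD f (a :: b :: r) = false :: (a (+) b) :: applyD (fun i => f i.+2) r.
Proof.
move=> f0 f1; rewrite /applyD /mkseq /= f0 f1 /=; congr (_ :: _ :: _).
rewrite -[2%N]addn0 iotaDl -map_comp; apply: eq_map => i /=.
by case: i => [|i] //=; rewrite ?f1.
Qed.

Lemma applyD_ext f g d : (forall i, i < size d -> f i = g i) ->
  applyD f d = applyD g d.
Proof.
move=> H; rewrite /applyD /mkseq; apply/eq_in_map => i; rewrite mem_iota add0n => Hi.
rewrite H //; case: i Hi => [|i] Hi //=; rewrite H //; exact: ltnW.
Qed.

Lemma Fchar t d s : s \in Fl t d <->
  exists f, [/\ validf f, count f (iota 0 (size d)) <= t & s = applyD f d].
Proof.
have [N] := ubnP (size d); elim: N d t s => // N IH d t s.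
case: d => [|[] r].
- move=> _; split.
    by rewrite inE => /eqP ->; exists (fun _ => false).
  by case=> f [_ _ ->]; rewrite inE.
- case: r => [|b r] Hs.
  + split.
      case: t => [|t] /=; rewrite !inE.
        by move=> /eqP ->; exists (fun _ => false).
      case/orP => /eqP ->; first by exists (fun _ => false).
      by exists (fun i => i == 0); split => // [[|i]].
    case=> f [vf cf ->]; rewrite /applyD /= /mkseq /=.
    move: cf; rewrite count_iotaS; case: (f 0) => /= cf; last by rewrite inE.
    by case: t cf => // t _; rewrite !inE eqxx orbT.
  + have Hr : size (b :: r) < N by [].
    split.
    * rewrite mem_cat => /orP [].
        case/mapP => s' /(IH _ _ _ Hr) [f [vf cf ->]] ->.
        exists (fun i => if i is i'.+1 then f i' else false); split.
        - by move=> [|i] //=; apply: vf.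
        - by rewrite count_iotaS.
        - by rewrite [RHS]applyD_cons0.
      case: t => [|t] //; case/mapP => s' /(IH r _ _ (ltnW Hr)) [f [vf cf ->]] ->.
      exists (fun i => match i with 0 => true | 1 => false | i'.+2 => f i' end); split.
      - by move=> [|[|i]] //=; apply: vf.
      - by rewrite count_iotaS count_iotaS.
      - by rewrite [RHS]applyD_cons1.
    * case=> f [vf cf ->].
      rewrite mem_cat; case f0: (f 0).
        have f1 : f 1 = false by apply/negbTE/vf; rewrite f0.
        rewrite applyD_cons1 //; apply/orP; right.
        move: cf; rewrite count_iotaS count_iotaS /= f0 f1 /=.
        case: t => [|t] // cf; apply/mapP; exists (applyD (fun i => f i.+2) r) => //.
        apply/(IH r _ _ (ltnW Hr)); exists (fun i => f i.+2); split => //.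
        by move=> i; apply: vf.
      rewrite applyD_cons0 //; apply/orP; left; apply/map_f/(IH _ _ _ Hr).
      exists (fun i => f i.+1); split => //; first by move=> i; apply: vf.
      by move: cf; rewrite count_iotaS f0.
- move=> Hs; have Hr : size r < N by [].
  split.
    case/mapP => s' /(IH _ _ _ Hr) [f [vf cf ->]] ->.
    exists (fun i => if i is i'.+1 then f i' else false); split.
    + by move=> [|i] //=; apply: vf.
    + by rewrite count_iotaS.
    + by rewrite [RHS]applyD_cons0.
  case=> f [vf cf ->].
  case f0: (f 0).
    have f1 : f 1 = false by apply/negbTE/vf; rewrite f0.
    case: r Hs Hr cf => [|b r] Hs Hr cf.
      by rewrite /applyD /mkseq /= f0 /= inE.
    rewrite applyD_cons1 // (_ : false (+) b :: _ = applyD (fun i => f i.+1) (b :: r));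
      last by rewrite applyD_cons0.
    apply/map_f/(IH _ _ _ Hr); exists (fun i => f i.+1); split => //.
    + by move=> i; apply: vf.
    + by move: cf; rewrite count_iotaS f0 add1n; exact: ltnW.
  rewrite applyD_cons0 //; apply/map_f/(IH _ _ _ Hr).
  exists (fun i => f i.+1); split => //; first by move=> i; apply: vf.
  by move: cf; rewrite count_iotaS f0.
Qed.

Lemma card_ordP n (P : pred nat) : #|[set i : 'I_n | P i]| = count P (iota 0 n).
Proof.
rewrite -sum1_card -sum1_count.
rewrite (eq_bigl (fun i : 'I_n => P i)); last by move=> i; rewrite inE.
by rewrite -(big_mkord P (fun _ => 1)) /index_iota subn0.
Qed.

Lemma size_deriv s : size (deriv_seq s) = (size s).-1.
Proof.
elim: s => [|a s IH] //; case: s IH => [|b s] IH //=.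
by move: IH; rewrite /deriv_seq /= => ->.
Qed.

Lemma deriv_cons2 a b s : deriv_seq (a :: b :: s) = (a (+) b) :: deriv_seq (b :: s).
Proof. by []. Qed.

Lemma nth_deriv s i : i < (size s).-1 ->
  nth false (deriv_seq s) i = nth false s i (+) nth false s i.+1.
Proof.
elim: s i => [|a s IH] i //; case: s IH => [|b s] IH //= Hi.
rewrite deriv_cons2; case: i Hi => [|i] Hi //=.
by rewrite IH.
Qed.

Fixpoint integ (a : bool) (s : seq bool) : seq bool :=
  if s is b :: s' then a :: integ (a (+) b) s' else [:: a].

Lemma deriv_integ s a : deriv_seq (integ a s) = s.
Proof.
elim: s a => [|b s IH] a //=.
have -> : deriv_seq (a :: integ (a (+) b) s) =
  (a (+) (a (+) b)) :: deriv_seq (integ (a (+) b) s) by case: s {IH}.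
by rewrite IH addKb.
Qed.

Lemma size_integ s a : size (integ a s) = (size s).+1.
Proof. by elim: s a => [|b s IH] a //=; rewrite IH. Qed.

Lemma nth_integ0 s a : nth false (integ a s) 0 = a.
Proof. by case: s. Qed.

Lemma integ_deriv s a : integ a (deriv_seq (a :: s)) = a :: s.
Proof.
elim: s a => [|b s IH] a //.
by rewrite deriv_cons2 /= addKb IH.
Qed.

Definition inEn n (E : {set 'I_n}) (j : nat) : bool :=
  [exists i : 'I_n, (i \in E) && (val i == j)].

Lemma inEnP n (E : {set 'I_n}) j (Hj : j < n) : inEn E j = (Ordinal Hj \in E).
Proof.
apply/existsP/idP => [[i /andP [iE /eqP ij]]|HE].
  by have -> : Ordinal Hj = i by apply: val_inj.
by exists (Ordinal Hj); rewrite HE eqxx.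
Qed.

Lemma inEn_lt n (E : {set 'I_n}) j : inEn E j -> j < n.
Proof. by case/existsP => i /andP [_ /eqP <-]; apply: ltn_ord. Qed.

Lemma nth_phiE n (E : {set 'I_n}) (x : n.-tuple bool) j : j < n ->
  nth false (phiE E x) j = if inEn E j then nth false x j.-1 else nth false x j.
Proof.
move=> Hj.
have -> : nth false (phiE E x) j = tnth (phiE E x) (Ordinal Hj) by rewrite (tnth_nth false).
by rewrite tnth_mktuple (inEnP E Hj).
Qed.

Lemma grain0 n (E : {set 'I_n}) : grain_pattern E -> inEn E 0 = false.
Proof.
case/andP => /forallP H0 _; apply/negbTE/existsP => [[i /andP [iE /eqP i0]]].
by move: (H0 i); rewrite iE /= i0.
Qed.

Lemma grainS n (E : {set 'I_n}) j : grain_pattern E -> inEn E j -> inEn E j.+1 -> False.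
Proof.
case/andP => _ /forallP H1 /existsP [i /andP [iE /eqP ij]] /existsP [k /andP [kE /eqP kj]].
move: (H1 i); rewrite iE /= => /forallP /(_ k); rewrite kE /= kj ij.
by rewrite eqxx.
Qed.

Lemma deriv_phiE n (E : {set 'I_n}) (x : n.-tuple bool) : grain_pattern E ->
  deriv_seq (phiE E x) = applyD (fun k => inEn E k.+1) (deriv_seq x).
Proof.
move=> gE; apply: (@eq_from_nth _ false).
  by rewrite size_applyD !size_deriv !size_tuple.
rewrite size_deriv size_tuple => i Hi.
have Hi1 : i.+1 < n by case: n x E gE Hi => [|n] //.
have Hi0 : i < n by apply: ltnW.
have Hix : i < (size x).-1 by rewrite size_tuple.
rewrite nth_deriv ?size_tuple // nth_phiE // nth_phiE //.
rewrite /applyD nth_mkseq ?size_deriv ?size_tuple //.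
case h1: (inEn E i.+1).
  have h0 : inEn E i = false by apply/negbTE/negP => h; exact: (grainS gE h h1).
  by rewrite h0 /= addbb.
case h0: (inEn E i).
  case: i h0 h1 Hi Hi1 Hi0 Hix => [|i] h0 h1 Hi Hi1 Hi0 Hix; first by rewrite grain0 in h0.
  rewrite /= h0 /= !nth_deriv ?size_tuple //; last exact: ltnW.
  by case: (nth false x i); case: (nth false x i.+1); case: (nth false x i.+2).
case: i h0 h1 Hi Hi1 Hi0 Hix => [|i] h0 h1 Hi Hi1 Hi0 Hix /=;
  by rewrite ?h0 nth_deriv ?size_tuple.
Qed.

Lemma phiE_head n (E : {set 'I_n}) (x : n.-tuple bool) : grain_pattern E ->
  nth false (phiE E x) 0 = nth false x 0.
Proof.
move=> gE; case: (ltnP 0 n) => Hn.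
  by rewrite nth_phiE // grain0.
by rewrite !nth_default ?size_tuple.
Qed.

Lemma seq_from_deriv (s1 s2 : seq bool) : size s1 = size s2 ->
  nth false s1 0 = nth false s2 0 -> deriv_seq s1 = deriv_seq s2 -> s1 = s2.
Proof.
case: s1 s2 => [|a s1] [|b s2] //= _ ->.
by move=> hd; rewrite -(integ_deriv s1 b) -(integ_deriv s2 b) hd.
Qed.

Lemma card_grain n (E : {set 'I_n}) : grain_pattern E ->
  #|E| = count (fun k => inEn E k.+1) (iota 0 n.-1).
Proof.
move=> gE.
have HE : E = [set i : 'I_n | inEn E i].
  by apply/setP => i; rewrite inE (inEnP E (ltn_ord i)); congr (_ \in E); apply: val_inj.
rewrite {1}HE card_ordP; case: n E gE HE => [|n] E gE _ //.
by rewrite count_iotaS (grain0 gE).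
Qed.

Lemma Phi_char n t (x y : n.-tuple bool) :
  (y \in Phi t x) = (nth false y 0 == nth false x 0) && (deriv_seq y \in Fl t (deriv_seq x)).
Proof.
apply/imsetP/andP.
  case=> E; rewrite inE => /andP [gE cE] ->; split; first by rewrite phiE_head.
  rewrite deriv_phiE //; apply/Fchar; exists (fun k => inEn E k.+1); split => //.
  - by move=> i h; apply/negP => h'; exact: (grainS gE h h').
  - by rewrite size_deriv size_tuple -card_grain.
case=> /eqP hy /Fchar [f [vf cf hd]].
pose E := [set i : 'I_n | (0 < val i) && f (val i).-1].
have gE : grain_pattern E.
  apply/andP; split; apply/forallP => i; apply/implyP; rewrite inE => /andP [i0 fi] //.
  apply/forallP => j; apply/implyP; rewrite inE => /andP [_ fj]; apply/eqP => ji.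
  rewrite ji /= in fj; move: (vf _ fi); rewrite prednK // fj.
  by [].
exists E.
  rewrite inE gE /= /E (card_ordP n (fun j => (0 < j) && f j.-1)).
  move: cf; rewrite size_deriv size_tuple; case: (n) => [|n'] // cf.
  by rewrite count_iotaS /=.
apply: val_inj; apply: seq_from_deriv; first by rewrite !size_tuple.
  by rewrite hy phiE_head.
rewrite hd deriv_phiE //; apply: applyD_ext => i; rewrite size_deriv size_tuple => Hi.
have Hi1 : i.+1 < n by case: (n) Hi.
by rewrite (inEnP E Hi1) inE.
Qed.

Lemma Fl_size t d s : s \in Fl t d -> size s = size d.
Proof. by case/Fchar => f [_ _ ->]; rewrite size_applyD. Qed.

Lemma Fl_uniq t d : uniq (Fl t d).
Proof.
have [N] := ubnP (size d); elim: N d t => // N IH d t.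
case: d => [|[] r] //= Hs.
  case: r Hs => [|b r] Hs; first by case: t.
  rewrite cat_uniq map_inj_uniq; last by move=> ? ? [].
  rewrite IH //=; case: t => [|t] //=.
  rewrite map_inj_uniq; last by move=> ? ? [].
  rewrite IH ?andbT; last exact: ltnW.
  by apply/hasPn => s /mapP [s' _ ->]; apply/mapP => [[s'' _]].
by rewrite map_inj_uniq ?IH //; move=> ? ? [].
Qed.

Lemma card_tuples n (S : seq (seq bool)) : uniq S -> all (fun s => size s == n) S ->
  #|[set y : n.-tuple bool | val y \in S]| = size S.
Proof.
elim: S => [|a S IH] /=.
  by move=> _ _; rewrite (_ : [set y | _] = set0) ?cards0 //; apply/setP => y; rewrite !inE.
case/andP => aS uS /andP [Ha aS'].
rewrite (_ : [set y | _] = Tuple Ha |: [set y : n.-tuple bool | val y \in S]).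
  rewrite cardsU1 IH // inE /= (negbTE aS) //.
apply/setP => y; rewrite !inE.
by congr (_ || _); apply/eqP/eqP => [h|->] //; apply: val_inj.
Qed.

Lemma seq_integ (s : seq bool) : 0 < size s -> integ (nth false s 0) (deriv_seq s) = s.
Proof. by case: s => [|a s] // _; rewrite integ_deriv. Qed.

Lemma Bcount_count n (x : n.-tuple bool) j : 0 < n ->
  Bcount x j = count (fun s => weight s + j == weight (deriv_seq x)) (Fl 3 (deriv_seq x)).
Proof.
move=> Hn; set Q := (fun s => _).
pose S := map (integ (nth false x 0)) (filter Q (Fl 3 (deriv_seq x))).
rewrite /Bcount (_ : [set y in _ | _] = [set y : n.-tuple bool | val y \in S]).
  rewrite card_tuples.
  - by rewrite size_map size_filter.
  - rewrite map_inj_in_uniq ?filter_uniq ?Fl_uniq //.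
    by move=> s1 s2 _ _ h; rewrite -(deriv_integ s1 (nth false x 0)) h deriv_integ.
  - apply/allP => s /mapP [s' ]; rewrite mem_filter => /andP [_ /Fl_size h] ->.
    by rewrite size_integ h size_deriv size_tuple prednK.
apply/setP => y; rewrite !inE Phi_char; apply/idP/idP.
  case/andP => /andP [/eqP h0 hL] hQ; apply/mapP; exists (deriv_seq y).
    by rewrite mem_filter hL andbT.
  by rewrite -h0 seq_integ // size_tuple.
case/mapP => s; rewrite mem_filter => /andP [hQ hL] ->.
by rewrite deriv_integ nth_integ0 eqxx hL.
Qed.

Lemma Fl_tcons t b r : Fl t (true :: b :: r) = map (cons true) (Fl t (b :: r)) ++
  (if t is t'.+1 then map (fun s => false :: ~~ b :: s) (Fl t' r) else [::]).
Proof. by []. Qed.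

Lemma Fl_fcons t r : Fl t (false :: r) = map (cons false) (Fl t r).
Proof. by []. Qed.

Lemma weight_cons b s : weight (b :: s) = b + weight s.
Proof. by []. Qed.

Lemma Fl_wbound t d s : s \in Fl t d -> weight s <= weight d <= weight s + t.*2.
Proof.
have [N] := ubnP (size d); elim: N d t s => // N IH d t s.
case: d => [|[] r] Hs.
- by rewrite inE => /eqP ->.
- case: r Hs => [|b r] Hs.
    case: t => [|t]; rewrite /= !inE; first by move/eqP ->.
    by case/orP => /eqP -> /=; rewrite ?doubleS.
  rewrite Fl_tcons mem_cat => /orP [].
    case/mapP => s' hs' ->; have := IH (b :: r) t s' Hs hs'.
    rewrite !weight_cons; lia.
  case: t => [|t] //; case/mapP => s' hs' ->; have := IH r t s' (ltnW Hs) hs'.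
  rewrite !weight_cons doubleS; case: (b) => /=; lia.
- rewrite Fl_fcons => /mapP [s' hs' ->]; have := IH r t s' Hs hs'.
  by rewrite !weight_cons.
Qed.

Definition Dc t d j := count (fun s => weight s + j == weight d) (Fl t d).
Definition Pc t d k := Dc t d k.*2 + Dc t d k.*2.+1.

Lemma Pc_nil t k : Pc t [::] k = (k == 0).
Proof. by case: k. Qed.

Lemma Pc_false t r k : Pc t (false :: r) k = Pc t r k.
Proof. by rewrite /Pc /Dc Fl_fcons !count_map. Qed.

Lemma Pc_true1 t k : Pc t [:: true] k = ((k == 0) * (1 + (0 < t)))%N.
Proof. by case: t => [|t]; case: k => [|[|k]]. Qed.

Lemma Pc_tt t r k : Pc t (true :: true :: r) k =
  Pc t (true :: r) k + (if t is t'.+1 then (if k is k'.+1 then Pc t' r k' else 0) else 0).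
Proof.
rewrite /Pc /Dc Fl_tcons !count_cat !count_map.
have E1 : forall j, count (preim (cons true) (fun s => weight s + j == weight [:: true, true & r]))
    (Fl t (true :: r)) = count (fun s => weight s + j == weight (true :: r)) (Fl t (true :: r)).
  by move=> j; apply: eq_count => s /=; apply/eqP/eqP; lia.
Show. rewrite !E1; clear E1; case: t => [|t]; first by rewrite !addn0.
have E2 : forall j, count (preim (fun s => [:: false, ~~ true & s])
      (fun s => weight s + j == weight [:: true, true & r])) (Fl t r) =
    if 2 <= j then count (fun s => weight s + (j - 2) == weight r) (Fl t r) else 0.
  move=> j; case: ifP => hj.
    apply: eq_count => s /=.
    by apply/eqP/eqP; lia.
  rewrite -(count_pred0 (Fl t r)); apply: eq_in_count => s hs /=.
  have := Fl_wbound hs; rewrite /=.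
  by move=> H; apply/eqP; lia.
rewrite !count_map !E2; case: k => [|k] /=; first by rewrite !addn0.
rewrite !doubleS /= !subn2 /=; lia.
Qed.

Lemma Pc_tf t r k : Pc t (true :: false :: r) k =
  Pc t r k + (if t is t'.+1 then Pc t' r k else 0).
Proof.
rewrite /Pc /Dc Fl_tcons Fl_fcons !count_cat !count_map.
have E1 : forall j, count (preim (cons false) (preim (cons true) (fun s => weight s + j == weight [:: true, false & r])))
    (Fl t r) = count (fun s => weight s + j == weight r) (Fl t r).
  move=> j; apply: eq_count => s /=.
  by apply/eqP/eqP; lia.
rewrite !E1; clear E1; case: t => [|t]; first by rewrite !addn0.
have E2 : forall j, count (preim (fun s => [:: false, ~~ false & s])
      (fun s => weight s + j == weight [:: true, false & r])) (Fl t r) =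
    count (fun s => weight s + j == weight r) (Fl t r).
  move=> j; apply: eq_count => s /=.
  by apply/eqP/eqP; lia.
rewrite !count_map !E2; lia.
Qed.

Lemma runs_aux_ex s : exists h T, forall c, runs1_aux c.+1 s = (c + h).+1 :: T.
Proof.
elim: s => [|[] s [h [T IH]]].
- by exists 0, [::] => c; rewrite addn0.
- by exists h.+1, T => c /=; rewrite IH addnS addSn.
- by exists 0, (runs1_aux 0 s) => c /=; rewrite addn0.
Qed.

Local Open Scope ring_scope.

Definition b2 (a : rat) := a * (a - 1) / 2.
Definition b3 (a : rat) := a * (a - 1) * (a - 2) / 6.

Definition Cf (t k : nat) (w m m1 m2 : rat) : rat :=
  let d := w - m in let e := w - 2 * m + m1 in
  match t, k with
  | 0, 0 => 1
  | 1, 0 => 1 + m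
  | 1, 1 => d
  | 2, 0 => 1 + m + b2 m
  | 2, 1 => d * m + e
  | 2, 2 => b2 d - e
  | 3, 0 => 1 + m + b2 m + b3 m
  | 3, 1 => d * (1 + m + b2 m) - m * (m - m1)
  | 3, 2 => (1 + m) * (b2 d - d) - (w - 2 * m - 3) * (m - m1) - m2
  | 3, 3 => b3 d - d * (d + 1) + d * (m - m1) + 4 * e + m2
  | _, _ => 0
  end.

Definition CfD t k d : rat :=
  Cf t k (weight d)%:R (nruns d)%:R (nruns_len 1 d)%:R (nruns_len 2 d)%:R.

Lemma CfD_nil t k : (t <= 3)%N -> ((Pc t [::] k)%:R : rat) = CfD t k [::].
Proof.
rewrite Pc_nil /CfD /nruns /nruns_len /=.
case: t => [|[|[|[|t]]]] // _; case: k => [|[|[|[|k]]]]; by rewrite /Cf /b2 /b3 /=; field.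
Qed.

Lemma Pc_tt0 r k : Pc 0 (true :: true :: r) k = Pc 0 (true :: r) k.
Proof. by rewrite Pc_tt addn0. Qed.
Lemma Pc_ttS0 t r : Pc t.+1 (true :: true :: r) 0 = Pc t.+1 (true :: r) 0.
Proof. by rewrite Pc_tt addn0. Qed.
Lemma Pc_ttSS t r k : ((Pc t.+1 (true :: true :: r) k.+1)%:R : rat) =
  (Pc t.+1 (true :: r) k.+1)%:R + (Pc t r k)%:R.
Proof. by rewrite Pc_tt natrD. Qed.
Lemma Pc_tf0 r k : Pc 0 (true :: false :: r) k = Pc 0 r k.
Proof. by rewrite Pc_tf addn0. Qed.
Lemma Pc_tfS t r k : ((Pc t.+1 (true :: false :: r) k)%:R : rat) =
  (Pc t.+1 r k)%:R + (Pc t r k)%:R.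
Proof. by rewrite Pc_tf natrD. Qed.

Ltac fin := rewrite /Cf /b2 /b3 /=; field.

Lemma closed_form d t k : (t <= 3)%N -> ((Pc t d k)%:R : rat) = CfD t k d.
Proof.
have [N] := ubnP (size d); elim: N d t k => // N IH d t k.
case: d => [|[] r] Hs Ht.
- exact: CfD_nil.
- case: r Hs => [|b r] Hs.
    rewrite Pc_true1 /CfD /nruns /nruns_len /=.
    by case: t Ht => [|[|[|[|t]]]] // _; case: k => [|[|[|[|k]]]]; fin.
  case: b Hs => Hs.
  {
    case: r Hs => [|[] r] Hs.
    - by case: t Ht => [|[|[|[|t]]]] // _; case: k => [|[|[|[|k]]]];
        rewrite /Pc /Dc /CfD /nruns /nruns_len /=; fin.
    { have IH1 := fun t k => IH [:: true, true & r] t k Hs.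
      have IH0 := fun t k => IH (true :: r) t k (ltnW Hs).
      have [h [T Haux]] := runs_aux_ex r.
      case: t Ht => [|[|[|[|t]]]] // _; case: k => [|[|[|[|k]]]];
        rewrite 1?Pc_tt0 1?Pc_ttS0 1?Pc_ttSS ?IH1 ?IH0 //.
      all: rewrite /CfD /nruns /nruns_len /runs1 /= ?Haux /=.
      all: clear Haux; case: h => [|[|h]] /=.
      all: rewrite /Cf /b2 /b3 /=.
      all: by field. }
    { have IH1 := fun t k => IH [:: true, false & r] t k Hs.
      have IH0 := fun t k => IH (false :: r) t k (ltnW Hs).
      case: t Ht => [|[|[|[|t]]]] // _; case: k => [|[|[|[|k]]]];
        rewrite 1?Pc_tt0 1?Pc_ttS0 1?Pc_ttSS ?IH1 ?IH0 //.
      all: rewrite /CfD /nruns /nruns_len /runs1 /= /Cf /b2 /b3 /=.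
      all: by field. } }
  {
    have IH0 := fun t k => IH r t k (ltnW Hs).
    case: t Ht => [|[|[|[|t]]]] // _;
      rewrite ?Pc_tf0 ?Pc_tfS ?IH0 //.
    all: rewrite /CfD /nruns /nruns_len (_ : runs1 (true :: false :: r) = 1%N :: runs1 r) //=.
    all: case: k => [|[|[|[|k]]]]. all: rewrite /Cf /b2 /b3 /=. all: by field. }
- by rewrite Pc_false (IH r t k Hs Ht).
Qed.

Lemma binom2R n : ((('C(n, 2))%:Z)%:~R : rat) = b2 n%:R.
Proof.
rewrite /b2; elim: n => [|n IH]; first by rewrite (_ : 'C(0,2) = 0%N) // mul0r mul0r.
by rewrite binS bin1 PoszD intrD IH; field.
Qed.

Lemma binom3R n : ((('C(n, 3))%:Z)%:~R : rat) = b3 n%:R.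
Proof.
rewrite /b3; elim: n => [|n IH]; first by rewrite (_ : 'C(0,3) = 0%N) // !mul0r.
by rewrite binS PoszD intrD IH binom2R /b2; field.
Qed.

Lemma Dc7 d : Dc 3 d 7 = 0%N.
Proof.
rewrite /Dc; apply/eqP; rewrite -leqn0 leqNgt -has_count; apply/hasPn => s hs /=.
have := Fl_wbound hs => /andP [_ h]; apply/eqP => e; move: h; rewrite -e.
by rewrite /= leq_add2l.
Qed.

Lemma key (a : nat) (b : int) : ((a%:R : rat) = b%:~R) -> a%:Z = b.
Proof. by move=> h; apply: (@intr_inj rat); rewrite -h. Qed.

Lemma intrnat (k : nat) : ((k%:Z)%:~R : rat) = k%:R.
Proof. by []. Qed.

Theorem lemma4p4 (n : nat) (x : n.-tuple bool) : (1 <= n)%N ->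
  let w := weight (deriv_seq x) in
  let m := nruns (deriv_seq x) in
  let m1 := nruns_len 1 (deriv_seq x) in
  let m2 := nruns_len 2 (deriv_seq x) in
  let B := Bcount x in
  let W : int := w%:Z in
  let M : int := m%:Z in
  let M1 : int := m1%:Z in
  let M2 : int := m2%:Z in
  let d : int := W - M in
  [/\ ((B 0 + B 1)%N%:Z = 1 + M + ('C(m, 2))%:Z + ('C(m, 3))%:Z),
      ((B 2 + B 3)%N%:Z = d * (1 + M + ('C(m, 2))%:Z) - M * (M - M1)),
      ((B 4 + B 5)%N%:Z = (1 + M) * (('C(w - m, 2))%:Z - d)
                          - (W - 2 * M - 3) * (M - M1) - M2)
    & ((B 6%N)%:Z = ('C(w - m, 3))%:Z - d * (d + 1) + d * (M - M1)
                  + 4 * (W - 2 * M + M1) + M2)].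
Proof.
move=> Hn; cbv zeta.
set dx := deriv_seq x.
have HB : forall j, Bcount x j = Dc 3 dx j := fun j => Bcount_count x j Hn.
rewrite !HB.
have hw : weight dx = (nruns dx + Pc 1 dx 1)%N.
  apply/eqP; rewrite -(eqr_nat rat) natrD closed_form // /CfD /Cf /=; apply/eqP; ring.
have hq : (weight dx - nruns dx)%N = Pc 1 dx 1 by rewrite hw addKn.
have hq' := @closed_form dx 1 1 (erefl _).
rewrite hq.
split; apply: key.
- rewrite (_ : (Dc 3 dx 0 + Dc 3 dx 1)%N = Pc 3 dx 0) // closed_form //.
  rewrite ?(intrD, intrN, intrM, intrB) ?binom2R ?binom3R ?intrnat ?hq' /CfD /Cf /b2 /b3 /=.
  first [done | ring | field].
- rewrite (_ : (Dc 3 dx 2 + Dc 3 dx 3)%N = Pc 3 dx 1) // closed_form //.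
  rewrite ?(intrD, intrN, intrM, intrB) ?binom2R ?binom3R ?intrnat ?hq' /CfD /Cf /b2 /b3 /=.
  by field.
- rewrite (_ : (Dc 3 dx 4 + Dc 3 dx 5)%N = Pc 3 dx 2) // closed_form //.
  rewrite ?(intrD, intrN, intrM, intrB) ?binom2R ?binom3R ?intrnat ?hq' /CfD /Cf /b2 /b3 /=.
  by field.
- rewrite (_ : Dc 3 dx 6 = Pc 3 dx 3); last by rewrite /Pc Dc7 addn0.
  rewrite closed_form //.
  rewrite ?(intrD, intrN, intrM, intrB) ?binom2R ?binom3R ?intrnat ?hq' /CfD /Cf /b2 /b3 /=.
  by field.
Qed.
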